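(* Let $v,d\in\mathbb{C}$ with $d\neq0$, $v\neq0$, and let $V(v,d)\subset\mathbb{C}P^2$ be the quartic curve $Xu_0^2-2v(u_2^2+u_1^2)u_2u_0+Xu_2^2=0$, where $X=du_2^2+2vu_1u_2+du_1^2$. If $d\neq\pm2v$, the only singular points of $V(v,d)$ are $[1,0,0]$ and $[0,1,0]$ and $V(v,d)$ is an irreducible quartic curve; moreover, if $d^2\neq v^2$ both singular points are nodes, and if $d^2=v^2$ both are ordinary cusps. If $d=2v$, then $V(v,d)$ is irreducible and has exactly one singular point $[1,-1,1]$ in addition to $[1,0,0],[0,1,0]$, and this point is a node. If $d=-2v$, then $V(v,d)$ is irreducible and has exactly one singular point $[-1,1,1]$ in addition to $[1,0,0],[0,1,0]$, and this point is a node.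
   Context: Coordinates $[u_0,u_1,u_2]$ on $\mathbb{C}P^2$. A singular point of the curve is a point where all partial derivatives of the defining polynomial vanish. *)

(* Defs.v *)
From HB Require Import structures.
From mathcomp Require Import all_boot all_order all_algebra.
From mathcomp Require Import mpoly.
From mathcomp Require Export complex.

Set Implicit Arguments.
Unset Strict Implicit.
Unset Printing Implicit Defensive.

Import GRing.Theory Num.Theory.
Local Open Scope ring_scope.

Definition i0 : 'I_3 := @Ordinal 3 0 isT.
Definition i1 : 'I_3 := @Ordinal 3 1 isT.
Definition i2 : 'I_3 := @Ordinal 3 2 isT.

Section Curves.
Variable C : fieldType.

Definition pt3 (a b c : C) : 'I_3 -> C := fun i => nth 0 [:: a; b; c] i.

Definition Xpoly (v d : C) : {mpoly C[3]} :=
  d *: 'X_i2 ^+ 2 + (2 * v) *: ('X_i1 * 'X_i2) + d *: 'X_i1 ^+ 2.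

Definition Vpoly (v d : C) : {mpoly C[3]} :=
  Xpoly v d * 'X_i0 ^+ 2
  - (2 * v) *: (('X_i2 ^+ 2 + 'X_i1 ^+ 2) * 'X_i2 * 'X_i0)
  + Xpoly v d * 'X_i2 ^+ 2.

Definition nonzero3 (a b c : C) : Prop := ~ (a = 0 /\ b = 0 /\ c = 0).

Definition proj_eq (a b c a' b' c' : C) : Prop :=
  exists k : C, k != 0 /\ a' = k * a /\ b' = k * b /\ c' = k * c.

Definition singular_pt (F : {mpoly C[3]}) (a b c : C) : Prop :=
  nonzero3 a b c /\ F.@[pt3 a b c] = 0 /\
  forall i : 'I_3, (F^`M(i)).@[pt3 a b c] = 0.

(** irreducibility in C[u0,u1,u2]: non-constant, and every factorisation
    has a constant factor *)
Definition irreducible_mpoly (F : {mpoly C[3]}) : Prop :=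
  (1 < msize F)%N /\
  forall p q : {mpoly C[3]}, F = p * q -> (msize p <= 1)%N \/ (msize q <= 1)%N.

(** local equation of F = 0 around [a,b,c] in the standard affine chart
    u_i = 1 (i = first index with nonzero coordinate), in local affine
    coordinates (x,y) centered at the point *)
Definition local_eq (F : {mpoly C[3]}) (a b c : C) : {mpoly C[2]} :=
  let x : {mpoly C[2]} := 'X_(@Ordinal 2 0 isT) in
  let y : {mpoly C[2]} := 'X_(@Ordinal 2 1 isT) in
  if a != 0 then F \mPo [tuple 1; (b / a)%:MP + x; (c / a)%:MP + y]
  else if b != 0 then F \mPo [tuple (a / b)%:MP + x; 1; (c / b)%:MP + y]
  else F \mPo [tuple (a / c)%:MP + x; (b / c)%:MP + y; 1].

Definition lcoef (g : {mpoly C[2]}) (i j : nat) : C :=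
  g@_([multinom [tuple i; j]] : 'X_{1..2}).

Definition double_pt (g : {mpoly C[2]}) : Prop :=
  lcoef g 0 0 = 0 /\ lcoef g 1 0 = 0 /\ lcoef g 0 1 = 0 /\
  ~ (lcoef g 2 0 = 0 /\ lcoef g 1 1 = 0 /\ lcoef g 0 2 = 0).

Definition quad_part (g : {mpoly C[2]}) (x y : C) : C :=
  lcoef g 2 0 * x ^+ 2 + lcoef g 1 1 * x * y + lcoef g 0 2 * y ^+ 2.

Definition cubic_part (g : {mpoly C[2]}) (x y : C) : C :=
  lcoef g 3 0 * x ^+ 3 + lcoef g 2 1 * x ^+ 2 * y
  + lcoef g 1 2 * x * y ^+ 2 + lcoef g 0 3 * y ^+ 3.

Definition quad_disc (g : {mpoly C[2]}) : C :=
  lcoef g 1 1 ^+ 2 - 4%:R * lcoef g 2 0 * lcoef g 0 2.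

(** node: double point whose tangent cone consists of two distinct lines *)
Definition is_node (F : {mpoly C[3]}) (a b c : C) : Prop :=
  singular_pt F a b c /\
  let g := local_eq F a b c in double_pt g /\ quad_disc g != 0.

(** ordinary cusp: double point whose tangent cone is a double line l^2,
    with l not dividing the cubic term (the cubic term does not vanish on
    the tangent direction) *)
Definition is_ordinary_cusp (F : {mpoly C[3]}) (a b c : C) : Prop :=
  singular_pt F a b c /\
  let g := local_eq F a b c in
  [/\ double_pt g, quad_disc g = 0 &
      exists x y : C, ~ (x = 0 /\ y = 0) /\ quad_part g x y = 0 /\
                      cubic_part g x y != 0].

End Curves.

(* Main.v *)
Require Import Defs.
From HB Require Import structures.
From mathcomp Require Import all_boot all_order all_algebra.
From mathcomp Require Import mpoly.
From mathcomp Require Import complex.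
From mathcomp Require Import ring zify.

Import GRing.Theory Num.Theory.
Local Open Scope ring_scope.

Section S.
Variable C : numClosedFieldType.
Variables v d : C.
Hypothesis dn0 : d != 0.
Hypothesis vn0 : v != 0.

Lemma two_n0 : (2%:R : C) != 0. Proof. by rewrite pnatr_eq0. Qed.

Lemma dX (i j : 'I_3) : ('X_j : {mpoly C[3]})^`M(i) = (j == i)%:R.
Proof.
rewrite mderivX mnm1E; case: eqP => [->|_]; last by rewrite scale0r.
have -> : (U_(i) - U_(i) = 0)%MM by apply/mnmP=> k; rewrite mnmBE subnn mnm0E.
by rewrite mpolyX0 scale1r.
Qed.

Lemma pt0 (a b c : C) : pt3 a b c i0 = a. Proof. by []. Qed.
Lemma pt1 (a b c : C) : pt3 a b c i1 = b. Proof. by []. Qed.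
Lemma pt2 (a b c : C) : pt3 a b c i2 = c. Proof. by []. Qed.

Definition Xs (b c : C) := d * c ^+ 2 + 2%:R * v * b * c + d * b ^+ 2.
Definition Fv (a b c : C) := Xs b c * (a ^+ 2 + c ^+ 2) - 2%:R * v * (c ^+ 2 + b ^+ 2) * c * a.
Definition D0 (a b c : C) := 2%:R * a * Xs b c - 2%:R * v * (c^+2 + b^+2) * c.
Definition D1 (a b c : C) := (2%:R * d * b + 2%:R * v * c) * (a^+2 + c^+2) - 4%:R * v * a * b * c.
Definition D2 (a b c : C) := (2%:R * d * c + 2%:R * v * b) * (a^+2 + c^+2) + 2%:R * c * Xs b c
   - 2%:R * v * a * (3%:R * c^+2 + b^+2).

Ltac evtac := rewrite /Vpoly /Xpoly /Fv /D0 /D1 /D2 /Xs ?expr2;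
  rewrite ?(mderivD, mderivB, mderivN, mderivM, mderivZ, dX) /=;
  rewrite !(mevalD, mevalB, mevalN, mevalM, mevalZ, mevalXU, mevalC, meval1, meval0) pt0 pt1 pt2;
  ring.

Lemma evalF a b c : (Vpoly v d).@[pt3 a b c] = Fv a b c. Proof. evtac. Qed.
Lemma evalD0 a b c : ((Vpoly v d)^`M(i0)).@[pt3 a b c] = D0 a b c. Proof. evtac. Qed.
Lemma evalD1 a b c : ((Vpoly v d)^`M(i1)).@[pt3 a b c] = D1 a b c. Proof. evtac. Qed.
Lemma evalD2 a b c : ((Vpoly v d)^`M(i2)).@[pt3 a b c] = D2 a b c. Proof. evtac. Qed.

Lemma ord3 (i : 'I_3) : [\/ i = i0, i = i1 | i = i2].
Proof.
case: i => [[|[|[|k]]] Hk]; [constructor 1|constructor 2|constructor 3|by []];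
  exact: val_inj.
Qed.

Lemma singE a b c : singular_pt (Vpoly v d) a b c <->
  [/\ nonzero3 a b c, Fv a b c = 0, D0 a b c = 0, D1 a b c = 0 & D2 a b c = 0].
Proof.
rewrite /singular_pt evalF; split.
  move=> [nz [hF hD]]; split => //.
  - by rewrite -evalD0 hD.
  - by rewrite -evalD1 hD.
  - by rewrite -evalD2 hD.
move=> [nz hF h0 h1 h2]; split => //; split => // i.
by case: (ord3 i) => ->; rewrite ?evalD0 ?evalD1 ?evalD2.
Qed.

Lemma sq_eq {x y : C} : x ^+ 2 = y ^+ 2 -> x = y \/ x = - y.
Proof.
move=> h; have : (x - y) * (x + y) = 0 by rewrite -subr_sqr h subrr.
by move/eqP; rewrite mulf_eq0 subr_eq0 addr_eq0 => /orP[/eqP|/eqP]; [left|right].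
Qed.

Lemma sing_solve a b c : nonzero3 a b c -> Fv a b c = 0 -> D0 a b c = 0 ->
  D1 a b c = 0 ->
  [\/ [/\ c = 0, b = 0 & a != 0], [/\ c = 0, a = 0 & b != 0],
      [/\ c != 0, d = 2%:R * v, a = c & b = - c] |
      [/\ c != 0, d = - (2%:R * v), a = - c & b = c]].
Proof.
move=> nz hF h0 h1.
have t2 := two_n0.
have [c0|cn0] := eqVneq c 0.
  have E : b * a ^+ 2 * (2%:R * d) = D1 a b c by rewrite /D1 c0; ring.
  move: E; rewrite h1 => /eqP; rewrite !mulf_eq0 (negbTE dn0) (negbTE t2) /= orbF.
  case/orP => [/eqP h|h].
    have an0 : a != 0 by apply/eqP => a0; apply: nz; rewrite a0 h c0.
    by constructor 1.
  move: h; rewrite orbb => /eqP a0.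
  have bn0 : b != 0 by apply/eqP => b0; apply: nz; rewrite a0 b0 c0.
  by constructor 2.
set X := Xs b c.
set S := c ^+ 2 + b ^+ 2.
have e0 : a * X = v * S * c.
  apply/eqP; rewrite -subr_eq0; apply/eqP.
  apply: (mulfI t2); rewrite mulr0 -h0 /D0 -/X -/S; ring.
have Xn0 : X != 0.
  apply/eqP => X0.
  move: e0; rewrite X0 mulr0 => /esym/eqP; rewrite !mulf_eq0 (negbTE vn0) (negbTE cn0) /= orbF.
  move/eqP => S0.
  have E : 2%:R * v * b * c = X - d * S by rewrite /X /Xs /S; ring.
  move: E; rewrite X0 S0 mulr0 subr0.
  move/eqP; rewrite !mulf_eq0 (negbTE vn0) (negbTE cn0) (negbTE t2) /= orbF => /eqP b0.
  move: S0; rewrite /S b0 expr0n /= addr0 => /eqP; rewrite expf_eq0 /= (negbTE cn0) //.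
have ca : c ^+ 2 = a ^+ 2.
  have E : X * (c ^+ 2 - a ^+ 2) = Fv a b c + 2%:R * (v * S * c - a * X) * a.
    rewrite /Fv /X /S /Xs; ring.
  move: E; rewrite hF e0 subrr !(mulr0, mul0r) addr0 => /eqP.
  by rewrite mulf_eq0 (negbTE Xn0) /= subr_eq0 => /eqP.
have [e [he ae]] : exists e : C, e ^+ 2 = 1 /\ a = e * c.
  case: (sq_eq (esym ca)) => ->; [exists 1 | exists (-1)]; split; ring.
have eX : X = e * v * S.
  have E : c * (X - e * v * S) = e * (a * X - v * S * c) - (e ^+ 2 - 1) * c * X.
    by rewrite ae; ring.
  move: E; rewrite e0 subrr he subrr !(mul0r, mulr0) subr0 => /eqP.
  by rewrite mulf_eq0 (negbTE cn0) /= subr_eq0 => /eqP.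
have e1 : (d - e * v) * b = - v * c.
  have E : D1 a b c = 4%:R * c ^+ 2 * ((d - e * v) * b + v * c) + (e ^+ 2 - 1) * ((2%:R * d * b + 2%:R * v * c) * c ^+ 2).
    by rewrite /D1 ae; ring.
  move: E; rewrite h1 he subrr mul0r addr0 => /esym/eqP; rewrite !mulf_eq0 (negbTE cn0) orbF.
  have -> : (4%:R : C) == 0 = false by rewrite pnatr_eq0.
  by rewrite /= addr_eq0 => /eqP ->; rewrite mulNr.
have e2 : (d - e * v) * S + 2%:R * v * b * c = 0.
  have -> : (d - e * v) * S + 2%:R * v * b * c = X - e * v * S by rewrite /X /Xs /S; ring.
  by rewrite eX subrr.
have bc : b ^+ 2 = c ^+ 2.
  have E : v * c * (b ^+ 2 - c ^+ 2) = b * ((d - e * v) * S + 2%:R * v * b * c) - S * ((d - e * v) * b + v * c).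
    rewrite /S; ring.
  move: E; rewrite e2 e1 mulNr addNr !mulr0 subr0 => /eqP.
  by rewrite !mulf_eq0 (negbTE vn0) (negbTE cn0) /= subr_eq0 => /eqP.
have [f [hf bf]] : exists f : C, f ^+ 2 = 1 /\ b = f * c.
  case: (sq_eq bc) => ->; [exists 1 | exists (-1)]; split; ring.
have df : d = (e - f) * v.
  have E : c * (d - (e - f) * v) = f * ((d - e * v) * b + v * c) - (f ^+ 2 - 1) * c * (d - e * v).
    by rewrite bf; ring.
  move: E; rewrite e1 mulNr addNr hf subrr !(mulr0, mul0r) subr0 => /eqP; rewrite mulf_eq0 (negbTE cn0) /= subr_eq0.
  by move/eqP.
case: (sq_eq (etrans he (esym (expr1n _ 2)))) => ee; subst e;
  case: (sq_eq (etrans hf (esym (expr1n _ 2)))) => ff; subst f.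
- by move: dn0; rewrite df subrr mul0r eqxx.
- by constructor 3; split => //; rewrite ?df ?ae ?bf; ring.
- by constructor 4; split => //; rewrite ?df ?ae ?bf; ring.
- by move: dn0; rewrite df subrr mul0r eqxx.
Qed.


Local Notation F := (Vpoly v d).

Lemma pe_nz (x y z a b c : C) : nonzero3 x y z -> proj_eq x y z a b c -> nonzero3 a b c.
Proof.
move=> nz [k [kn0 [-> [-> ->]]]] [/eqP h1 [/eqP h2 /eqP h3]].
apply: nz; move: h1 h2 h3; rewrite !mulf_eq0 (negbTE kn0) /= => /eqP -> /eqP -> /eqP ->.
by [].
Qed.

Lemma nz100 : nonzero3 (1 : C) 0 0. Proof. by case => /eqP; rewrite oner_eq0. Qed.
Lemma nz010 : nonzero3 (0 : C) 1 0. Proof. by case => _ [/eqP]; rewrite oner_eq0. Qed.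
Lemma nzm11 : nonzero3 (1 : C) (-1) 1. Proof. by case => /eqP; rewrite oner_eq0. Qed.
Lemma nzmm11 : nonzero3 (-1 : C) 1 1. Proof. by case => _ [/eqP]; rewrite oner_eq0. Qed.

Lemma sing100 a b c : proj_eq 1 0 0 a b c -> singular_pt F a b c.
Proof.
move=> pe; apply/singE; split; first exact: pe_nz nz100 pe.
all: case: pe => k [_ [-> [-> ->]]]; rewrite /Fv /D0 /D1 /D2 /Xs; ring.
Qed.

Lemma sing010 a b c : proj_eq 0 1 0 a b c -> singular_pt F a b c.
Proof.
move=> pe; apply/singE; split; first exact: pe_nz nz010 pe.
all: case: pe => k [_ [-> [-> ->]]]; rewrite /Fv /D0 /D1 /D2 /Xs; ring.
Qed.

Lemma singm11 a b c : d = 2%:R * v -> proj_eq 1 (-1) 1 a b c -> singular_pt F a b c.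
Proof.
move=> hd pe; apply/singE; split; first exact: pe_nz nzm11 pe.
all: case: pe => k [_ [-> [-> ->]]]; rewrite /Fv /D0 /D1 /D2 /Xs hd; ring.
Qed.

Lemma singmm11 a b c : d = - (2%:R * v) -> proj_eq (-1) 1 1 a b c -> singular_pt F a b c.
Proof.
move=> hd pe; apply/singE; split; first exact: pe_nz nzmm11 pe.
all: case: pe => k [_ [-> [-> ->]]]; rewrite /Fv /D0 /D1 /D2 /Xs hd; ring.
Qed.

Lemma sing_cases a b c : singular_pt F a b c ->
  [\/ proj_eq 1 0 0 a b c, proj_eq 0 1 0 a b c,
      d = 2%:R * v /\ proj_eq 1 (-1) 1 a b c |
      d = - (2%:R * v) /\ proj_eq (-1) 1 1 a b c].
Proof.
move/singE => [nz hF h0 h1 _].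
case: (sing_solve _ _ _ nz hF h0 h1) => [[-> -> an0]|[-> -> bn0]|[cn0 hd -> ->]|[cn0 hd -> ->]].
- by constructor 1; exists a; rewrite an0 mulr1 mulr0.
- by constructor 2; exists b; rewrite bn0 mulr1 mulr0.
- by constructor 3; split => //; exists c; rewrite cn0 mulr1 mulrN1.
- by constructor 4; split => //; exists c; rewrite cn0 mulr1 mulrN1.
Qed.

Lemma two_v_neq : d = 2%:R * v -> d = - (2%:R * v) -> False.
Proof.
move=> -> h.
have : 4%:R * v = 2%:R * v - (- (2%:R * v)) by ring.
rewrite -h subrr => /eqP; rewrite mulf_eq0 pnatr_eq0 /= (negbTE vn0).
by [].
Qed.

Lemma sing_gen a b c : d != 2%:R * v -> d != - (2%:R * v) ->
  singular_pt F a b c <-> proj_eq 1 0 0 a b c \/ proj_eq 0 1 0 a b c.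
Proof.
move=> h1 h2; split; last by case; [exact: sing100 | exact: sing010].
case/sing_cases => [?|?|[/eqP]|[/eqP]]; by [left|right|rewrite (negbTE h1)|rewrite (negbTE h2)].
Qed.

Lemma sing_p a b c : d = 2%:R * v -> singular_pt F a b c <->
  [\/ proj_eq 1 0 0 a b c, proj_eq 0 1 0 a b c | proj_eq 1 (-1) 1 a b c].
Proof.
move=> hd; split; last by case; [exact: sing100 | exact: sing010 | exact: singm11].
case/sing_cases => [?|?|[_ ?]|[h _]]; by [constructor 1|constructor 2|constructor 3|case: (two_v_neq hd h)].
Qed.

Lemma sing_m a b c : d = - (2%:R * v) -> singular_pt F a b c <->
  [\/ proj_eq 1 0 0 a b c, proj_eq 0 1 0 a b c | proj_eq (-1) 1 1 a b c].
Proof.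
move=> hd; split; last by case; [exact: sing100 | exact: sing010 | exact: singmm11].
case/sing_cases => [?|?|[h _]|[_ ?]]; by [constructor 1|constructor 2|case: (two_v_neq h hd)|constructor 3].
Qed.

Lemma Fn0 : F != 0.
Proof.
apply/eqP => h; move: (evalF 1 1 0); rewrite h meval0 /Fv /Xs => /eqP.
apply/negP; rewrite eq_sym.
have -> : (d * 0 ^+ 2 + 2%:R * v * 1 * 0 + d * 1 ^+ 2) * (1 ^+ 2 + 0 ^+ 2) -
  2%:R * v * (0 ^+ 2 + 1 ^+ 2) * 0 * 1 = d by ring.
exact: dn0.
Qed.

Lemma Fhomog : F \is 4.-homog.
Proof.
have hX (i : 'I_3) : ('X_i : {mpoly C[3]}) \is 1.-homog by rewrite dhomogX /= mdeg1.
have hX2 (i : 'I_3) : ('X_i : {mpoly C[3]}) ^+ 2 \is 2.-homog by exact: (@dhomogMn _ _ _ 1 _ 2 (hX i)).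
have hXp : Xpoly v d \is 2.-homog.
  rewrite /Xpoly; apply: rpredD; first apply: rpredD.
  - exact/rpredZ/hX2.
  - exact/rpredZ/(dhomogM (hX _) (hX _)).
  - exact/rpredZ/hX2.
rewrite /Vpoly; apply: rpredD; first apply: rpredB.
- exact: (dhomogM hXp (hX2 _)).
- apply/rpredZ; apply: (dhomogM (d := 3)) (hX _).
  exact: (dhomogM (rpredD (hX2 _) (hX2 _)) (hX _)).
- exact: (dhomogM hXp (hX2 _)).
Qed.

Lemma msizeF : msize F = 5%N.
Proof.
have h := dhomog_msize Fhomog.
have := dhomog_uniq Fn0 Fhomog h.
have : msize F != 0%N by rewrite msize_poly_eq0 Fn0.
by case: (msize F) => [|[|[|[|[|[|k]]]]]].
Qed.
End S.


Section Psi.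
Variable C : numClosedFieldType.
Local Notation D := {poly {poly C}}.
Local Notation E := {poly D}.
Definition f3 : C -> E := (@polyC _) \o (@polyC _) \o (@polyC _).
Definition h3 (i : 'I_3) : E :=
  match val i with 0 => 'X | 1 => ('X)%:P | _ => ('X)%:P%:P end.
Definition psi (p : {mpoly C[3]}) : E := mmap f3 h3 p.

Lemma psiD p q : psi (p + q) = psi p + psi q. Proof. by rewrite /psi rmorphD. Qed.
Lemma psiB p q : psi (p - q) = psi p - psi q. Proof. by rewrite /psi rmorphB. Qed.
Lemma psiN p : psi (- p) = - psi p. Proof. by rewrite /psi rmorphN. Qed.
Lemma psiM p q : psi (p * q) = psi p * psi q. Proof. by rewrite /psi rmorphM. Qed.
Lemma psiXn p k : psi (p ^+ k) = psi p ^+ k. Proof. by rewrite /psi rmorphXn. Qed.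
Lemma psiZ c p : psi (c *: p) = (c%:P%:P%:P) * psi p. Proof. by rewrite /psi mmapZ. Qed.
Lemma psiX i : psi 'X_i = h3 i. Proof. by rewrite /psi mmapX mmap1U. Qed.

Lemma ord3p (i : 'I_3) : [\/ i = i0, i = i1 | i = i2].
Proof.
case: i => [[|[|[|k]]] Hk]; [constructor 1|constructor 2|constructor 3|by []];
  exact: val_inj.
Qed.

Lemma mnm3_eq (m m' : 'X_{1..3}) :
  (m' == m) = [&& m' i0 == m i0, m' i1 == m i1 & m' i2 == m i2].
Proof.
apply/eqP/and3P => [->|[/eqP h0 /eqP h1 /eqP h2]]; first by rewrite !eqxx.
apply/mnmP => i.
by case: (ord3p i) => ->.
Qed.

Lemma coefCXn (R : ringType) (q : R) k i : (q%:P * 'X^k)`_i = q * (i == k)%:R.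
Proof. by rewrite coefCM coefXn. Qed.

Lemma mmap1_h3 (m' : 'X_{1..3}) :
  mmap1 h3 m' = (('X%:P ^+ m' i2) * 'X ^+ m' i1)%:P * 'X^(m' i0) :> E.
Proof.
rewrite /mmap1 !big_ord_recr big_ord0 /=.
rewrite [widen_ord _ (widen_ord _ _)](_ : _ = i0); last exact: val_inj.
rewrite [widen_ord _ _](_ : _ = i1); last exact: val_inj.
rewrite [ord_max](_ : _ = i2); last exact: val_inj.
rewrite /h3 /= rmorphM /= !rmorphXn /=; ring.
Qed.

Lemma psi_mono (m' : 'X_{1..3}) (a b c : nat) :
  (((mmap1 h3 m')`_a)`_b)`_c = [&& m' i0 == a, m' i1 == b & m' i2 == c]%:R.
Proof.
rewrite mmap1_h3 coefCXn mulr_natr coefMn -rmorphXn /= coefCXn mulr_natr !coefMn coefXn.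
rewrite [m' i0 == a]eq_sym [m' i1 == b]eq_sym [m' i2 == c]eq_sym.
by case: (a == m' i0); case: (b == m' i1); case: (c == m' i2).
Qed.

Lemma psi_coef p (m : 'X_{1..3}) : (((psi p)`_(m i0))`_(m i1))`_(m i2) = p@_m.
Proof.
elim/mpolyind: p => [|c m' p _ _ IH]; first by rewrite /psi mmap0 !coef0 mcoeff0.
rewrite psiD psiZ /psi mmapX !coefD IH mcoeffD mcoeffZ mcoeffX; congr (_ + _).
rewrite !coefCM psi_mono mnm3_eq.
by [].
Qed.

Lemma psi_const p (k : C) : psi p = k%:P%:P%:P -> (msize p <= 1)%N.
Proof.
move=> h.
have -> : p = k%:MP.
  apply/mpolyP => m; rewrite -psi_coef h mcoeffC !coefC.
  have -> : (m == 0%MM) = [&& m i0 == 0%N, m i1 == 0%N & m i2 == 0%N].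
    by rewrite mnm3_eq !mnm0E.
  case: (m i0 == 0%N) => /=; rewrite ?coefC ?coef0; case: (m i1 == 0%N) => /=; rewrite ?coefC ?coef0; by case: (m i2 == 0%N); rewrite /= ?mulr1 ?mulr0 ?coef0.
by rewrite msizeC; case: (k != 0).
Qed.
End Psi.


Section Q.
Variable C : numClosedFieldType.
Variables v d : C.
Hypothesis dn0 : d != 0.
Hypothesis vn0 : v != 0.
Local Notation D := {poly {poly C}}.
Local Notation E := {poly D}.

Lemma coef_size (R : nzSemiRingType) (p : {poly R}) i : p`_i != 0 -> (i < size p)%N.
Proof.
move=> h; rewrite ltnNge; apply/negP => /leq_sizeP /(_ i (leqnn i)) /eqP.
exact/negP.
Qed.

Lemma size3 (R : nzSemiRingType) (p : {poly R}) : p`_2 != 0 ->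
  (forall j, (3 <= j)%N -> p`_j = 0) -> size p = 3%N.
Proof.
move=> h2 hj; apply/eqP; rewrite eqn_leq; apply/andP; split.
  exact/leq_sizeP.
exact: coef_size h2.
Qed.

Lemma quad_root (al be ga : C) : be != 0 -> exists z, al * z ^+ 2 + be * z + ga = 0.
Proof.
move=> hb.
pose p : {poly C} := al%:P * 'X^2 + be%:P * 'X + ga%:P.
have : size p != 1%N.
  apply/negP => /size_poly1P [c _ hp].
  have : p`_1 = be by rewrite /p !coefE /=; ring.
  by rewrite hp coefC /= => /esym/eqP; rewrite (negbTE hb).
case/closed_rootP => z; rewrite /root /p !(hornerD, hornerCM, hornerXn, hornerX, hornerC) => /eqP hz.
by exists z.
Qed.

Definition Bz (z : C) := 2%:R * v * (1 + z ^+ 2).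
Definition Xz (z : C) := d + 2%:R * v * z + d * z ^+ 2.
Definition Dz (z : C) := 2%:R * Bz z * (2%:R * v * (2%:R * z)) - 8%:R * Xz z * (2%:R * v + d * (2%:R * z)).

Lemma SL : exists z, Bz z ^+ 2 - 4%:R * Xz z ^+ 2 = 0 /\ Dz z != 0.
Proof.
have t2 : (2%:R : C) != 0 by rewrite pnatr_eq0.
have n16 : (16%:R : C) != 0 by rewrite pnatr_eq0.
have [hd|hd] := eqVneq d (2%:R * v).
-
  have [z hz] := quad_root (v + d) (2%:R * v) (v + d) (mulf_neq0 t2 vn0).
  have eX : Xz z = - (v * (1 + z ^+ 2)).
    apply/eqP; rewrite -subr_eq0 opprK; apply/eqP; rewrite -hz /Xz; ring.
  exists z; split; first by rewrite /Bz eX; ring.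
  have -> : Dz z = 16%:R * v * (1 + z ^+ 2) * ((v + d) * z + v) by rewrite /Dz /Bz eX; ring.
  rewrite !mulf_neq0 //.
  + apply/eqP => S0.
    have : 2%:R * v * z = 0.
      have -> : 2%:R * v * z = ((v + d) * z ^+ 2 + 2%:R * v * z + (v + d)) - (v + d) * (1 + z ^+ 2) by ring.
      by rewrite hz S0; ring.
    move/eqP; rewrite !mulf_eq0 (negbTE t2) (negbTE vn0) /= => /eqP z0.
    by move: S0; rewrite z0 expr0n /= addr0 => /eqP; rewrite oner_eq0.
  + apply/eqP => L0.
    have : d * (d + 2%:R * v) = 0.
      have -> : d * (d + 2%:R * v) = (v + d) * ((v + d) * z ^+ 2 + 2%:R * v * z + (v + d)) - ((v + d) * z + v) ^+ 2 by ring.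
      by rewrite hz L0; ring.
    move/eqP; rewrite mulf_eq0 (negbTE dn0) /= hd.
    have -> : 2%:R * v + 2%:R * v = 4%:R * v :> C by ring.
    by rewrite mulf_eq0 pnatr_eq0 (negbTE vn0).
- have h2v : - (2%:R * v) != 0 by rewrite oppr_eq0 mulf_neq0.
  have [z hz] := quad_root (v - d) (- (2%:R * v)) (v - d) h2v.
  have eX : Xz z = v * (1 + z ^+ 2).
    apply/eqP; rewrite -subr_eq0; apply/eqP; rewrite -[X in _ = X]oppr0 -hz /Xz; ring.
  exists z; split; first by rewrite /Bz eX; ring.
  have -> : Dz z = 16%:R * v * (1 + z ^+ 2) * ((v - d) * z - v) by rewrite /Dz /Bz eX; ring.
  rewrite !mulf_neq0 //.
  + apply/eqP => S0.
    have : 2%:R * v * z = 0.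
      have -> : 2%:R * v * z = (v - d) * (1 + z ^+ 2) - ((v - d) * z ^+ 2 + - (2%:R * v) * z + (v - d)) by ring.
      by rewrite hz S0; ring.
    move/eqP; rewrite !mulf_eq0 (negbTE t2) (negbTE vn0) /= => /eqP z0.
    by move: S0; rewrite z0 expr0n /= addr0 => /eqP; rewrite oner_eq0.
  + rewrite subr_eq0; apply/eqP => L0.
    have : d * (d - 2%:R * v) = 0.
      have -> : d * (d - 2%:R * v) = (v - d) * ((v - d) * z ^+ 2 + - (2%:R * v) * z + (v - d)) - ((v - d) * z - v) ^+ 2 by ring.
      by rewrite hz L0 subrr; ring.
    by move/eqP; rewrite mulf_eq0 (negbTE dn0) /= subr_eq0 (negbTE hd).
Qed.


Definition rD : D := ('X)%:P.
Definition Xd : D := (d%:P)%:P * rD ^+ 2 + ((2%:R * v)%:P)%:P * 'X * rD + (d%:P)%:P * 'X ^+ 2.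
Definition Bd : D := ((2%:R * v)%:P)%:P * (rD ^+ 2 + 'X ^+ 2) * rD.
Definition T : E := Xd%:P * 'X^2 + (- Bd)%:P * 'X + (Xd * rD ^+ 2)%:P.
Local Notation mu := (map_poly (horner_eval (1 : C))).

Lemma quad_coef (R : nzRingType) (A B C0 : R) i :
  (A%:P * 'X^2 + B%:P * 'X + C0%:P)`_i =
  (if i == 2%N then A else if i == 1%N then B else if i == 0%N then C0 else 0).
Proof.
rewrite !coefD !coefCM coefXn coefX coefC.
by case: i => [|[|[|i]]] /=; rewrite ?mulr0 ?mulr1 ?addr0 ?add0r.
Qed.

Lemma XdE : Xd = (d%:P)%:P * 'X^2 + ((2%:R * v)%:P * 'X)%:P * 'X + (d%:P * 'X^2)%:P.
Proof. rewrite /Xd /rD; ring. Qed.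

Lemma Xd2 : Xd`_2 = d%:P. Proof. by rewrite XdE quad_coef. Qed.

Lemma Xdn0 : Xd != 0.
Proof. by apply/eqP => h; move: Xd2; rewrite h coef0 => /esym/eqP; rewrite polyC_eq0 (negbTE dn0). Qed.

Lemma sizeXd : size Xd = 3%N.
Proof.
apply: size3; first by rewrite Xd2 polyC_eq0.
by move=> j hj; rewrite XdE quad_coef; case: j hj => [|[|[|j]]].
Qed.

Lemma leadXd : lead_coef Xd = d%:P.
Proof. by rewrite lead_coefE sizeXd Xd2. Qed.

Lemma mu_rD : mu rD = 1.
Proof. by rewrite /rD map_polyC /= horner_evalE hornerX. Qed.

Lemma mu_Xd : mu Xd = d%:P + (2%:R * v)%:P * 'X + d%:P * 'X ^+ 2.
Proof.
rewrite /Xd !(rmorphD, rmorphM, rmorphXn) /= mu_rD !map_polyC !map_polyX /= !horner_evalE !hornerC.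
ring.
Qed.

Lemma mu_Bd : mu Bd = (2%:R * v)%:P * (1 + 'X ^+ 2).
Proof.
rewrite /Bd !(rmorphD, rmorphM, rmorphXn) /= mu_rD !map_polyC !map_polyX /= !horner_evalE !hornerC.
ring.
Qed.

Lemma ev_Xd z : (mu Xd).[z] = Xz z.
Proof. by rewrite mu_Xd /Xz !(hornerD, hornerCM, hornerXn, hornerX, hornerC). Qed.

Lemma ev_Bd z : (mu Bd).[z] = Bz z.
Proof. by rewrite mu_Bd /Bz !(hornerD, hornerCM, hornerXn, hornerX, hornerC). Qed.


Lemma ev_mul (z : C) (p q : D) : (mu (p * q)).[z] = (mu p).[z] * (mu q).[z].
Proof. by rewrite rmorphM /= hornerM. Qed.

Lemma CL (c e1 e2 : D) : c * e1 = Xd -> c * e2 = - Bd -> exists k : C, c = k%:P%:P.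
Proof.
move=> h1 h2.
have cn0 : c != 0 by apply/eqP => c0; move: Xdn0; rewrite -h1 c0 mul0r eqxx.
have en0 : e1 != 0 by apply/eqP => e0; move: Xdn0; rewrite -h1 e0 mulr0 eqxx.
have hs : (size c + size e1 = 4)%N.
  have := size_mul cn0 en0; rewrite h1 sizeXd.
  by case: (size c + size e1)%N => [|[|[|[|[|k]]]]].
have hl : lead_coef c * lead_coef e1 = d%:P by rewrite -lead_coefM h1 leadXd.
have lcn0 : lead_coef c != 0 by rewrite lead_coef_eq0.
have len0 : lead_coef e1 != 0 by rewrite lead_coef_eq0.
have hsl : size (lead_coef c) = 1%N.
  have := size_mul lcn0 len0; rewrite hl size_polyC dn0 /=.
  have := size_poly_gt0 (lead_coef c); have := size_poly_gt0 (lead_coef e1).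
  rewrite lcn0 len0.
  case: (size (lead_coef c)) => [|[|k]]; case: (size (lead_coef e1)) => [|[|j]] //=; by rewrite ?addnS ?addSn.
have hlc : lead_coef c = ((lead_coef c)`_0)%:P by apply: size1_polyC; rewrite hsl.
set k := (lead_coef c)`_0 in hlc.
have kn0 : k != 0 by move: lcn0; rewrite hlc polyC_eq0.
have [sc1|sc2] := leqP (size c) 1.
  exists k; rewrite -hlc; rewrite {1}(size1_polyC sc1); congr (_%:P).
  rewrite lead_coefE; have := size_poly_gt0 c; rewrite cn0.
  by case: (size c) sc1 => [|[|]].
have smu : size (mu c) = size c.
  by apply: size_map_poly_id0; rewrite horner_evalE hlc hornerC.
have : size (mu c) != 1%N by rewrite smu; case: (size c) sc2 => [|[|]].
case/closed_rootP => z /eqP hz.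
have hX : Xz z = 0 by rewrite -ev_Xd -h1 ev_mul hz mul0r.
have hB : Bz z = 0.
  have := congr1 (fun p => (mu p).[z]) h2; rewrite /= ev_mul hz mul0r rmorphN /= hornerN ev_Bd.
  by move/esym/eqP; rewrite oppr_eq0 => /eqP.
have t2 : (2%:R : C) != 0 by rewrite pnatr_eq0.
move: hB; rewrite /Bz => /eqP; rewrite !mulf_eq0 (negbTE t2) (negbTE vn0) /= => /eqP S0.
have : 2%:R * v * z = 0.
  have -> : 2%:R * v * z = Xz z - d * (1 + z ^+ 2) by rewrite /Xz; ring.
  by rewrite hX S0; ring.
move/eqP; rewrite !mulf_eq0 (negbTE t2) (negbTE vn0) /= => /eqP z0.
by move: S0; rewrite z0 expr0n /= addr0 => /eqP; rewrite oner_eq0.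
Qed.


Lemma dXd z : ((mu Xd)^`()).[z] = 2%:R * v + d * (2%:R * z).
Proof.
rewrite mu_Xd !(derivD, derivC, deriv_mulC, derivX, derivXn) /=.
rewrite !(hornerD, hornerCM, hornerMn, hornerXn, hornerX, hornerC, horner0, hornerC) /=.
rewrite expr1; ring.
Qed.

Lemma dBd z : ((mu Bd)^`()).[z] = 2%:R * v * (2%:R * z).
Proof.
rewrite mu_Bd !(derivD, derivC, deriv_mulC, derivX, derivXn) /=.
rewrite !(hornerD, hornerCM, hornerMn, hornerXn, hornerX, hornerC, horner0, hornerC) /=.
rewrite expr1; ring.
Qed.

Lemma SqL (a b c e : D) : a * c = Xd -> a * e + b * c = - Bd -> b * e = Xd * rD ^+ 2 -> False.
Proof.
move=> h1 h2 h3.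
have m1 : mu a * mu c = mu Xd by rewrite -rmorphM h1.
have m2 : mu a * mu e + mu b * mu c = - mu Bd by rewrite -!rmorphM -rmorphD h2 rmorphN.
have m3 : mu b * mu e = mu Xd by rewrite -rmorphM h3 rmorphM rmorphXn /= mu_rD expr1n mulr1.
pose g := mu a * mu e - mu b * mu c.
have hg : g ^+ 2 = mu Bd ^+ 2 - (mu Xd ^+ 2) *+ 4.
  have -> : g ^+ 2 = (mu a * mu e + mu b * mu c) ^+ 2 - ((mu a * mu c) * (mu b * mu e)) *+ 4.
    by rewrite /g; ring.
  by rewrite m2 m1 m3; ring.
have [z [hz1 hz2]] := SL.
have gz : g.[z] = 0.
  have : g.[z] ^+ 2 = 0.
    have := congr1 (fun p => p.[z]) hg.
    rewrite /= hornerD hornerN hornerMn !horner_exp ev_Xd ev_Bd => ->.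
    by rewrite -hz1 mulr_natl.
  by move/eqP; rewrite expf_eq0 /= => /eqP.
have := congr1 (fun p => (deriv p).[z]) hg.
rewrite /= !(derivB, derivMn, deriv_exp) /=.
have gz' : (mu a).[z] * (mu e).[z] - (mu b).[z] * (mu c).[z] = 0.
  by rewrite -gz /g hornerD hornerN !hornerM.
rewrite !(hornerMn, hornerM, hornerD, hornerN, horner_exp) !expr1 gz' mulr0 mul0rn.
rewrite dXd dBd ev_Xd ev_Bd => H.
by apply: (negP hz2); apply/eqP; rewrite [X in _ = X]H /Dz; ring.
Qed.


Lemma psiF : psi C (Vpoly v d) = T.
Proof.
rewrite /Vpoly /Xpoly !(psiD, psiB, psiN, psiM, psiZ, psiXn, psiX) /h3 /= /T /Xd /Bd /rD.
ring.
Qed.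

Lemma T_coef i : T`_i =
  (if i == 2%N then Xd else if i == 1%N then - Bd else if i == 0%N then Xd * rD ^+ 2 else 0).
Proof. by rewrite /T quad_coef. Qed.

Lemma Tn0 : T != 0.
Proof. by apply/eqP => h; move: (T_coef 2); rewrite h coef0 /= => /esym/eqP; rewrite (negbTE Xdn0). Qed.

Lemma sizeT : size T = 3%N.
Proof.
apply: size3; first by rewrite T_coef /= Xdn0.
by move=> j hj; rewrite T_coef; case: j hj => [|[|[|j]]].
Qed.

Lemma coef2M (R : nzSemiRingType) (p q : {poly R}) : (size p <= 2)%N -> (size q <= 2)%N ->
  [/\ (p * q)`_2 = p`_1 * q`_1, (p * q)`_1 = p`_0 * q`_1 + p`_1 * q`_0 &
      (p * q)`_0 = p`_0 * q`_0].
Proof.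
move=> hp hq.
have p2 : p`_2 = 0 by move/leq_sizeP: hp; apply.
have q2 : q`_2 = 0 by move/leq_sizeP: hq; apply.
rewrite !coefM !big_ord_recr !big_ord0 /= p2 q2.
split; rewrite ?mulr0 ?mul0r ?addr0 ?add0r //.
Qed.

Lemma KL (P Q : E) : P * Q = T ->
  (exists k : C, P = k%:P%:P%:P) \/ (exists k : C, Q = k%:P%:P%:P).
Proof.
move=> h.
have Pn0 : P != 0 by apply/eqP => P0; move: Tn0; rewrite -h P0 mul0r eqxx.
have Qn0 : Q != 0 by apply/eqP => Q0; move: Tn0; rewrite -h Q0 mulr0 eqxx.
have hs : (size P + size Q = 4)%N.
  have := size_mul Pn0 Qn0; rewrite h sizeT.
  by case: (size P + size Q)%N => [|[|[|[|[|k]]]]].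
have sP := size_poly_gt0 P; have sQ := size_poly_gt0 Q.
rewrite Pn0 in sP; rewrite Qn0 in sQ.
have [sP1|sP2] := leqP (size P) 1.
  left; have hP := size1_polyC sP1.
  have [k hk] : exists k, P`_0 = k%:P%:P.
    apply: (@CL (P`_0) (Q`_2) (Q`_1)).
    - by rewrite -coefCM -hP h T_coef.
    - by rewrite -coefCM -hP h T_coef.
  by exists k; rewrite hP hk.
have [sQ1|sQ2] := leqP (size Q) 1.
  right; have hQ := size1_polyC sQ1.
  have [k hk] : exists k, Q`_0 = k%:P%:P.
    apply: (@CL (Q`_0) (P`_2) (P`_1)).
    - by rewrite -coefCM -hQ mulrC h T_coef.
    - by rewrite -coefCM -hQ mulrC h T_coef.
  by exists k; rewrite hQ hk.
have hP2 : (size P <= 2)%N by move: hs sQ2; clear; lia.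
have hQ2 : (size Q <= 2)%N by move: hs sP2; clear; lia.
have [c2 c1 c0] := coef2M _ _ _ hP2 hQ2.
exfalso; apply: (@SqL (P`_1) (P`_0) (Q`_1) (Q`_0)).
- by rewrite -c2 h T_coef.
- by rewrite addrC -c1 h T_coef.
- by rewrite -c0 h T_coef.
Qed.

End Q.


Section L.
Variable C : numClosedFieldType.
Definition ox : 'I_2 := @Ordinal 2 0 isT.
Definition oy : 'I_2 := @Ordinal 2 1 isT.

Lemma ord2 (k : 'I_2) : k = ox \/ k = oy.
Proof. case: k => [[|[|k]] Hk]; [left|right|by []]; exact: val_inj. Qed.

Lemma mt0 (a b : nat) : ([multinom [tuple a; b]] : 'X_{1..2}) ox = a. Proof. by []. Qed.
Lemma mt1 (a b : nat) : ([multinom [tuple a; b]] : 'X_{1..2}) oy = b. Proof. by []. Qed.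

Lemma lc_mono (a b i j : nat) :
  ('X_ox ^+ i * 'X_oy ^+ j : {mpoly C[2]})@_[multinom [tuple a; b]] = ((i == a) && (j == b))%:R.
Proof.
rewrite !mpolyXn -mpolyXD mcoeffX.
suff -> : (U_(ox) *+ i + U_(oy) *+ j == [multinom [tuple a; b]])%MM = (i == a) && (j == b) by [].
apply/eqP/andP => [/mnmP h|[/eqP <- /eqP <-]].
  have h0 := h ox; have h1 := h oy.
  rewrite mt0 mnmDE !mulmnE !mnm1E in h0; rewrite mt1 mnmDE !mulmnE !mnm1E in h1.
  by move: h0 h1 => /= <- <-; lia.
apply/mnmP => k; case: (ord2 k) => ->; rewrite ?mt0 ?mt1 mnmDE !mulmnE !mnm1E /=;
  lia.
Qed.

Variables v d : C.
Local Notation F := (Vpoly v d).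
Definition M i j : {mpoly C[2]} := 'X_ox ^+ i * 'X_oy ^+ j.

Lemma lcM a b i j : lcoef (M i j) a b = ((i == a) && (j == b))%:R.
Proof. exact: lc_mono. Qed.

Lemma lcD (g h : {mpoly C[2]}) a b : lcoef (g + h) a b = lcoef g a b + lcoef h a b.
Proof. by rewrite /lcoef mcoeffD. Qed.
Lemma lcZ (c : C) (g : {mpoly C[2]}) a b : lcoef (c *: g) a b = c * lcoef g a b.
Proof. by rewrite /lcoef mcoeffZ. Qed.

Definition g100 : {mpoly C[2]} :=
  d *: M 2 0 + (2%:R * v) *: M 1 1 + d *: M 0 2 + (- (2%:R * v)) *: M 0 3
  + (- (2%:R * v)) *: M 2 1 + d *: M 0 4 + (2%:R * v) *: M 1 3 + d *: M 2 2.

Lemma loc100 : local_eq F 1 0 0 = g100.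
Proof.
rewrite /local_eq oner_neq0 /Vpoly /Xpoly /g100 /M -!mul_mpolyC.
rewrite !(rmorphD, rmorphB, rmorphN, rmorphM, rmorphXn) /=.
rewrite !comp_mpolyC !comp_mpolyXU /= !mul0r.
ring.
Qed.

Definition g010 : {mpoly C[2]} :=
  d *: M 2 0 + (- (2%:R * v)) *: M 1 1 + d *: M 0 2 + (2%:R * v) *: M 0 3
  + (2%:R * v) *: M 2 1 + d *: M 0 4 + (- (2%:R * v)) *: M 1 3 + d *: M 2 2.

Lemma loc010 : local_eq F 0 1 0 = g010.
Proof.
rewrite /local_eq eqxx /= oner_neq0 /Vpoly /Xpoly /g010 /M -!mul_mpolyC.
rewrite !(rmorphD, rmorphB, rmorphN, rmorphM, rmorphXn) /=.
rewrite !comp_mpolyC !comp_mpolyXU /= !mul0r.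
ring.
Qed.

Definition gm11 : {mpoly C[2]} :=
  (2%:R * v) *: M 2 0 + (4%:R * v) *: M 1 1 + (4%:R * v) *: M 0 2 + (4%:R * v) *: M 0 3
  + (2%:R * v) *: M 1 2 + (2%:R * v) *: M 2 1 + (2%:R * v) *: M 0 4 + (2%:R * v) *: M 1 3
  + (2%:R * v) *: M 2 2.

Lemma locm11 : d = 2%:R * v -> local_eq F 1 (-1) 1 = gm11.
Proof.
move=> hd.
rewrite /local_eq oner_neq0 /Vpoly /Xpoly /gm11 /M -!mul_mpolyC hd !divr1.
rewrite !(rmorphD, rmorphB, rmorphN, rmorphM, rmorphXn) /=.
rewrite !comp_mpolyC !comp_mpolyXU /=.
ring.
Qed.

Definition gmm11 : {mpoly C[2]} :=
  (- (2%:R * v)) *: M 2 0 + (4%:R * v) *: M 1 1 + (- (4%:R * v)) *: M 0 2 + (4%:R * v) *: M 0 3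
  + (- (2%:R * v)) *: M 1 2 + (2%:R * v) *: M 2 1 + (- (2%:R * v)) *: M 0 4 + (2%:R * v) *: M 1 3
  + (- (2%:R * v)) *: M 2 2.

Lemma locmm11 : d = - (2%:R * v) -> local_eq F (-1) 1 1 = gmm11.
Proof.
move=> hd.
have hn : (-1 : C) != 0 by rewrite oppr_eq0 oner_eq0.
rewrite /local_eq hn /Vpoly /Xpoly /gmm11 /M -!mul_mpolyC hd invrN1 !mul1r.
rewrite !(rmorphD, rmorphB, rmorphN, rmorphM, rmorphXn) /=.
rewrite !comp_mpolyC !comp_mpolyXU /=.
ring.
Qed.
End L.


Section N.
Variable C : numClosedFieldType.
Variables v d : C.
Hypothesis dn0 : d != 0.
Hypothesis vn0 : v != 0.
Local Notation F := (Vpoly v d).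

Lemma irrF : irreducible_mpoly F.
Proof.
split; first by rewrite (@msizeF C v d dn0).
move=> p q hF.
have := psiM C p q; rewrite -hF (psiF C v d) => /esym.
case/(@KL C v d dn0 vn0) => [[k hk]|[k hk]]; [left|right]; exact: psi_const hk.
Qed.

Lemma pe_refl (x y z : C) : proj_eq x y z x y z.
Proof. by exists 1; rewrite !mul1r; split => //; exact: oner_neq0. Qed.

Ltac lcomp := rewrite !(lcD, lcZ, lcM) /= ?(mulr0, mulr1, addr0, add0r).

Lemma n4 : (4%:R : C) != 0. Proof. by rewrite pnatr_eq0. Qed.
Lemma n2 : (2%:R : C) != 0. Proof. by rewrite pnatr_eq0. Qed.

Lemma dpt (a b c : C) : a != 0 -> ~ (a = 0 /\ b = 0 /\ c = 0).
Proof. by move=> h [/eqP]; rewrite (negbTE h). Qed.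
Lemma dpt2 (a b c : C) : b != 0 -> ~ (a = 0 /\ b = 0 /\ c = 0).
Proof. by move=> h [_ [/eqP]]; rewrite (negbTE h). Qed.

Lemma node100 : d ^+ 2 != v ^+ 2 -> is_node F 1 0 0.
Proof.
move=> hdv; split; first exact/sing100/pe_refl.
rewrite /= loc100 /double_pt /quad_disc /g100.
lcomp.
split; first by do 3 split => //; exact: dpt.
have -> : (2%:R * v) ^+ 2 - 4%:R * d * d = 4%:R * (v ^+ 2 - d ^+ 2) by ring.
by rewrite mulf_neq0 ?n4 // subr_eq0 eq_sym.
Qed.

Lemma node010 : d ^+ 2 != v ^+ 2 -> is_node F 0 1 0.
Proof.
move=> hdv; split; first exact/sing010/pe_refl.
rewrite /= loc010 /double_pt /quad_disc /g010.
lcomp.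
split; first by do 3 split => //; exact: dpt.
have -> : (- (2%:R * v)) ^+ 2 - 4%:R * d * d = 4%:R * (v ^+ 2 - d ^+ 2) by ring.
by rewrite mulf_neq0 ?n4 // subr_eq0 eq_sym.
Qed.

Lemma dv_cases : d ^+ 2 = v ^+ 2 -> d = v \/ d = - v.
Proof.
move=> h; have : (d - v) * (d + v) = 0 by rewrite -subr_sqr h subrr.
by move/eqP; rewrite mulf_eq0 subr_eq0 addr_eq0 => /orP[/eqP|/eqP]; [left|right].
Qed.

Lemma cusp100 : d ^+ 2 = v ^+ 2 -> is_ordinary_cusp F 1 0 0.
Proof.
move=> hdv; split; first exact/sing100/pe_refl.
rewrite /= loc100 /double_pt /quad_disc /quad_part /cubic_part /g100.
lcomp.
split.
- by do 3 split => //; exact: dpt.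
- apply/eqP; rewrite subr_eq0; apply/eqP; rewrite -mulrA -expr2 hdv; ring.
- case: (dv_cases hdv) => hd.
  + exists 1, (-1); split; first by case => /eqP; rewrite oner_eq0.
    split; first by rewrite hd; ring.
    have -> : 0 * 1 ^+ 3 + - (2%:R * v) * 1 ^+ 2 * -1 + 0 * 1 * (-1) ^+ 2 + - (2%:R * v) * (-1) ^+ 3 = 4%:R * v :> C by ring.
    by rewrite mulf_neq0 ?n4.
  + exists 1, 1; split; first by case => /eqP; rewrite oner_eq0.
    split; first by rewrite hd; ring.
    have -> : 0 * 1 ^+ 3 + - (2%:R * v) * 1 ^+ 2 * 1 + 0 * 1 * 1 ^+ 2 + - (2%:R * v) * 1 ^+ 3 = - (4%:R * v) :> C by ring.
    by rewrite oppr_eq0 mulf_neq0 ?n4.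
Qed.

Lemma cusp010 : d ^+ 2 = v ^+ 2 -> is_ordinary_cusp F 0 1 0.
Proof.
move=> hdv; split; first exact/sing010/pe_refl.
rewrite /= loc010 /double_pt /quad_disc /quad_part /cubic_part /g010.
lcomp.
split.
- by do 3 split => //; exact: dpt.
- apply/eqP; rewrite subr_eq0; apply/eqP; rewrite -mulrA -expr2 hdv; ring.
- case: (dv_cases hdv) => hd.
  + exists 1, 1; split; first by case => /eqP; rewrite oner_eq0.
    split; first by rewrite hd; ring.
    have -> : 0 * 1 ^+ 3 + 2%:R * v * 1 ^+ 2 * 1 + 0 * 1 * 1 ^+ 2 + 2%:R * v * 1 ^+ 3 = 4%:R * v :> C by ring.
    by rewrite mulf_neq0 ?n4.
  + exists 1, (-1); split; first by case => /eqP; rewrite oner_eq0.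
    split; first by rewrite hd; ring.
    have -> : 0 * 1 ^+ 3 + 2%:R * v * 1 ^+ 2 * -1 + 0 * 1 * (-1) ^+ 2 + 2%:R * v * (-1) ^+ 3 = - (4%:R * v) :> C by ring.
    by rewrite oppr_eq0 mulf_neq0 ?n4.
Qed.

Lemma nodem11 : d = 2%:R * v -> is_node F 1 (-1) 1.
Proof.
move=> hd; split; first by apply: singm11; [exact: hd | exact: pe_refl].
rewrite /= (locm11 C v d hd) /double_pt /quad_disc /gm11.
lcomp.
split; first by do 3 split => //; apply: dpt; rewrite mulf_neq0 ?n2.
have -> : (4%:R * v) ^+ 2 - 4%:R * (2%:R * v) * (4%:R * v) = - (4%:R * 4%:R) * v ^+ 2 :> C by ring.
by rewrite mulf_neq0 ?expf_neq0 // oppr_eq0 mulf_neq0 ?n4.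
Qed.

Lemma nodemm11 : d = - (2%:R * v) -> is_node F (-1) 1 1.
Proof.
move=> hd; split; first by apply: singmm11; [exact: hd | exact: pe_refl].
rewrite /= (locmm11 C v d hd) /double_pt /quad_disc /gmm11.
lcomp.
split; first by do 3 split => //; apply: dpt; rewrite oppr_eq0 mulf_neq0 ?n2.
have -> : (4%:R * v) ^+ 2 - 4%:R * (- (2%:R * v)) * (- (4%:R * v)) = - (4%:R * 4%:R) * v ^+ 2 :> C by ring.
by rewrite mulf_neq0 ?expf_neq0 // oppr_eq0 mulf_neq0 ?n4.
Qed.

End N.


Theorem lemma7p2 (R : rcfType) (v d : R[i]) :
  d != 0 -> v != 0 ->
  let F := Vpoly v d in
  [/\
   (* d <> +-2v *)
   (d != 2%:R * v -> d != - (2%:R * v) ->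
      [/\ (forall a b c, singular_pt F a b c <->
                         proj_eq 1 0 0 a b c \/ proj_eq 0 1 0 a b c),
          msize F = 5%N, irreducible_mpoly F,
          (d ^+ 2 != v ^+ 2 -> is_node F 1 0 0 /\ is_node F 0 1 0) &
          (d ^+ 2 = v ^+ 2 ->
             is_ordinary_cusp F 1 0 0 /\ is_ordinary_cusp F 0 1 0)]),
   (* d = 2v *)
   (d = 2%:R * v ->
      [/\ irreducible_mpoly F,
          (forall a b c, singular_pt F a b c <->
             [\/ proj_eq 1 0 0 a b c, proj_eq 0 1 0 a b c | proj_eq 1 (-1) 1 a b c]) &
          is_node F 1 (-1) 1]) &
   (* d = -2v *)
   (d = - (2%:R * v) ->
      [/\ irreducible_mpoly F,
          (forall a b c, singular_pt F a b c <->
             [\/ proj_eq 1 0 0 a b c, proj_eq 0 1 0 a b c | proj_eq (-1) 1 1 a b c]) &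
          is_node F (-1) 1 1])].
Proof.
move=> dn0 vn0 F; split.
- move=> h1 h2; split.
  + by move=> a b c; apply: sing_gen.
  + exact: msizeF.
  + exact: irrF.
  + by move=> h; split; [apply: node100 | apply: node010].
  + by move=> h; split; [apply: cusp100 | apply: cusp010].
- move=> hd; split; [exact: irrF | move=> a b c; exact: sing_p | exact: nodem11].
- move=> hd; split; [exact: irrF | move=> a b c; exact: sing_m | exact: nodemm11].
Qed.
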